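(* The generating function $$G_{(123,132)}(x,p,q,y,z)=\sum_{n\ge 0}\ \sum_{\pi\in S_n(123,132)} x^n p^{\operatorname{asc}(\pi)} q^{\operatorname{des}(\pi)} y^{\operatorname{MNA}(\pi)} z^{\operatorname{MND}(\pi)}$$ is equal to $$\frac{A}{1 - 2 q^2 x^2 z - p q x^2 y z - 2 p q^2 x^3 y z + q^4 x^4 z^2 - p q^3 x^4 y z^2},$$ where $$A=1 + x + p x^2 y + q x^2 z - 2 q^2 x^2 z - q^2 x^3 z - p q x^2 y z + 2 p q x^3 y z - 2 p q^2 x^3 y z - q^3 x^4 z^2 + q^4 x^4 z^2 + p q^2 x^4 y z^2 - p q^3 x^4 y z^2.$$
   Context: For $n\ge 0$, $S_n$ denotes the set of permutations $\pi=\pi_1\pi_2\cdots\pi_n$ of $[n]=\{1,\dots,n\}$ in one-line notation ($S_0$ consists of the empty permutation, for which all statistics below are $0$). A permutation $\pi\in S_n$ avoids a pattern $\tau\in S_k$ if there are no indices $i_1<\dots<i_k$ such that $\pi_{i_a}<\pi_{i_b}$ if and only if $\tau_a<\tau_b$; $S_n(\tau,\rho)$ is the set of permutations in $S_n$ avoiding both $\tau$ and $\rho$. $\operatorname{asc}(\pi)$ (resp. $\operatorname{des}(\pi)$) is the number of $i\in[n-1]$ with $\pi_i<\pi_{i+1}$ (resp. $\pi_i>\pi_{i+1}$). $\operatorname{MNA}(\pi)$ is the maximum size of a set $I\subseteq[n-1]$ such that $\pi_i<\pi_{i+1}$ for all $i\in I$ and $|i-j|\ge 2$ for distinct $i,j\in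 I$ (maximum number of non-overlapping ascents); $\operatorname{MND}(\pi)$ is defined analogously with $\pi_i>\pi_{i+1}$ (maximum number of non-overlapping descents). *)

(* Defs.v *)
From mathcomp Require Import all_boot all_order all_algebra all_fingroup.
Set Implicit Arguments. Unset Strict Implicit. Unset Printing Implicit Defensive.
Import GRing.Theory.

(* One-line notation of pi : 'S_n, with values shifted to 0..n-1 (0-based). *)
Definition oneline n (pi : 'S_n) : seq nat := [seq val (pi i) | i <- enum 'I_n].

Definition contains n k (pi : 'S_n) (tau : 'S_k) : bool :=
  [exists f : {ffun 'I_k -> 'I_n},
     [forall a : 'I_k, forall b : 'I_k,
        ((a < b) ==> (f a < f b)) &&
        ((pi (f a) < pi (f b)) == (tau a < tau b))]].

Definition avoids n k (pi : 'S_n) (tau : 'S_k) : bool := ~~ contains pi tau.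

(* the patterns 123 and 132 (0-based: 012 and 021) *)
Definition pat123 : 'S_3 := 1%g.
Definition pat132 : 'S_3 := tperm (inord 1 : 'I_3) (inord 2 : 'I_3).

Definition is_asc n (pi : 'S_n) (i : nat) : bool :=
  (i.+1 < n) && (nth 0 (oneline pi) i < nth 0 (oneline pi) i.+1).
Definition is_des n (pi : 'S_n) (i : nat) : bool :=
  (i.+1 < n) && (nth 0 (oneline pi) i > nth 0 (oneline pi) i.+1).

Definition asc n (pi : 'S_n) : nat := count (is_asc pi) (iota 0 n).
Definition des n (pi : 'S_n) : nat := count (is_des pi) (iota 0 n).

Definition nonoverlap n (I : {set 'I_n}) : bool :=
  [forall i in I, forall j in I, (i != j) ==> ((i.+1 < j) || (j.+1 < i))].

Definition MNA n (pi : 'S_n) : nat :=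
  \max_(I : {set 'I_n} | [forall i in I, is_asc pi i] && nonoverlap I) #|I|.
Definition MND n (pi : 'S_n) : nat :=
  \max_(I : {set 'I_n} | [forall i in I, is_des pi i] && nonoverlap I) #|I|.

Local Open Scope ring_scope.

Definition Gcoef (R : comNzRingType) (p q y z : R) (n : nat) : R :=
  \sum_(pi : 'S_n | avoids pi pat123 && avoids pi pat132)
     (p ^+ asc pi  *  q ^+ des pi  *  y ^+ MNA pi  *  z ^+ MND pi).

Definition Apoly (R : comNzRingType) (p q y z : R) : {poly R} :=
  1 + 'X + (p * y)%:P  *  'X^2 + (q * z)%:P  *  'X^2 - (2 * q^+2 * z)%:P  *  'X^2
  - (q^+2 * z)%:P  *  'X^3 - (p * q * y * z)%:P  *  'X^2 + (2 * p * q * y * z)%:P  *  'X^3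
  - (2 * p * q^+2 * y * z)%:P  *  'X^3 - (q^+3 * z^+2)%:P  *  'X^4 + (q^+4 * z^+2)%:P  *  'X^4
  + (p * q^+2 * y * z^+2)%:P  *  'X^4 - (p * q^+3 * y * z^+2)%:P  *  'X^4.

Definition Dpoly (R : comNzRingType) (p q y z : R) : {poly R} :=
  1 - (2 * q^+2 * z)%:P  *  'X^2 - (p * q * y * z)%:P  *  'X^2 - (2 * p * q^+2 * y * z)%:P  *  'X^3
  + (q^+4 * z^+2)%:P  *  'X^4 - (p * q^+3 * y * z^+2)%:P  *  'X^4.

(* Main.v *)
Require Import Defs.
From mathcomp Require Import all_boot all_order all_algebra all_fingroup.
Import GRing.Theory.
Local Open Scope ring_scope.
From mathcomp Require Import ring zify.
Local Close Scope ring_scope.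

Fixpoint gr (r : rel nat) (s : seq nat) : nat :=
  match s with
  | a :: t => match t with
              | b :: u => if r a b then (gr r u).+1 else gr r t
              | [::] => 0 end
  | [::] => 0 end.

Lemma nonoverlapP n (I : {set 'I_n}) :
  reflect (forall i j, i \in I -> j \in I -> i != j -> (i.+1 < j) || (j.+1 < i))
          (nonoverlap I).
Proof.
apply: (iffP forall_inP) => [H i j Hi Hj Hij | H i Hi].
  by move: (H i Hi) => /forall_inP /(_ j Hj) /implyP; apply.
by apply/forall_inP => j Hj; apply/implyP; apply: H.
Qed.

Section GrMax.
Variables (n : nat) (s : seq nat) (r : rel nat) (P : pred nat).
Hypothesis Hs : size s = n.
Hypothesis HP : forall i, P i = (i.+1 < n) && r (nth 0 s i) (nth 0 s i.+1).

Definition Vk k (I : {set 'I_n}) :=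
  [&& [forall i in I, P i], nonoverlap I & [forall i in I, k <= i]].

Lemma gr_drop_lt k : k.+1 < n -> gr r (drop k s) =
  if r (nth 0 s k) (nth 0 s k.+1) then (gr r (drop k.+2 s)).+1 else gr r (drop k.+1 s).
Proof.
move=> Hk.
rewrite (drop_nth 0); last by rewrite Hs; lia.
rewrite (drop_nth 0 (n := k.+1)); last by rewrite Hs.
by [].
Qed.

Lemma gr_drop_ge k : n <= k.+1 -> gr r (drop k s) = 0.
Proof.
move=> Hk.
have : size (drop k s) <= 1 by rewrite size_drop Hs; lia.
by case: (drop k s) => [|a [|b t]].
Qed.

Lemma key d : forall k, n - k <= d ->
  (exists I, Vk k I /\ #|I| = gr r (drop k s)) /\
  (forall I, Vk k I -> #|I| <= gr r (drop k s)).
Proof.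
elim: d => [|d IH] k Hd.
  rewrite gr_drop_ge; last by lia.
  split.
    exists set0; split; last by rewrite cards0.
    by apply/and3P; split; [apply/forall_inP => i; rewrite inE |
       apply/nonoverlapP => i j; rewrite inE | apply/forall_inP => i; rewrite inE].
  move=> I /and3P [H1 _ H3]; rewrite leqn0 cards_eq0; apply/eqP/setP => i.
  rewrite inE; apply/negbTE/negP => Hi.
  move: (forall_inP H1 i Hi) (forall_inP H3 i Hi); rewrite HP => /andP [Hlt _].
  have := ltn_ord i; lia.
case: (ltnP k.+1 n) => Hk; last first.
  rewrite gr_drop_ge //.
  split.
    exists set0; split; last by rewrite cards0.
    by apply/and3P; split; [apply/forall_inP => i; rewrite inE |
       apply/nonoverlapP => i j; rewrite inE | apply/forall_inP => i; rewrite inE].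
  move=> I /and3P [H1 _ H3]; rewrite leqn0 cards_eq0; apply/eqP/setP => i.
  rewrite inE; apply/negbTE/negP => Hi.
  move: (forall_inP H1 i Hi) (forall_inP H3 i Hi); rewrite HP => /andP [Hlt _].
  lia.
have Hk0 : k < n by lia.
pose ok := Ordinal Hk0.
pose ok1 := Ordinal Hk.
rewrite gr_drop_lt //.
case Hr: (r (nth 0 s k) (nth 0 s k.+1)) => /=.
- have [[I' [HV' HI']] IHb] := IH k.+2 ltac:(lia).
  move: HV' => /and3P [H1 H2 H3].
  have Hnot : ok \notin I'.
    apply/negP => Hi; move: (forall_inP H3 _ Hi) => /=; lia.
  split.
    exists (ok |: I'); split; last by rewrite cardsU1 Hnot HI'.
    apply/and3P; split.
    + apply/forall_inP => i; rewrite in_setU1 => /orP [/eqP -> | Hi].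
        by rewrite HP /= Hk Hr.
      exact: (forall_inP H1 i Hi).
    + apply/nonoverlapP => i j; rewrite !in_setU1 => /orP [/eqP -> | Hi] /orP [/eqP -> | Hj].
      * by rewrite eqxx.
      * by move=> _; move: (forall_inP H3 _ Hj) => /=; lia.
      * by move=> _; move: (forall_inP H3 _ Hi) => /=; lia.
      * exact: (nonoverlapP _ _ H2).
    + apply/forall_inP => i; rewrite in_setU1 => /orP [/eqP -> //| Hi].
      by move: (forall_inP H3 _ Hi); lia.
  move=> I /and3P [H1' H2' H3'].
  case: (boolP (ok \in I)) => HkI.
    have HV : Vk k.+2 (I :\ ok).
      apply/and3P; split.
      + by apply/forall_inP => i; rewrite in_setD1 => /andP [_ Hi]; apply: (forall_inP H1').
      + apply/nonoverlapP => i j; rewrite !in_setD1 => /andP [_ Hi] /andP [_ Hj].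
        exact: (nonoverlapP _ _ H2').
      + apply/forall_inP => i; rewrite in_setD1 => /andP [Hik Hi].
        have := (nonoverlapP _ _ H2') i ok Hi HkI Hik.
        have := forall_inP H3' _ Hi. simpl. lia.
    have := IHb _ HV.
    by rewrite (cardsD1 ok I) HkI.
  have HV : Vk k.+2 (I :\ ok1).
    apply/and3P; split.
    + by apply/forall_inP => i; rewrite in_setD1 => /andP [_ Hi]; apply: (forall_inP H1').
    + apply/nonoverlapP => i j; rewrite !in_setD1 => /andP [_ Hi] /andP [_ Hj].
      exact: (nonoverlapP _ _ H2').
    + apply/forall_inP => i; rewrite in_setD1 => /andP [Hik Hi].
      have Hik' : i != ok by apply/negP => /eqP He; move: HkI; rewrite -He Hi.
      have := forall_inP H3' _ Hi.
      move: Hik Hik'; rewrite -!(inj_eq val_inj) /=. lia.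
  have := IHb _ HV; rewrite (cardsD1 ok1 I).

  move=> Hle; case: (ok1 \in I) => /=; [by rewrite add1n ltnS | by rewrite add0n leqW].
- have [[I' [HV' HI']] IHb] := IH k.+1 ltac:(lia).
  split.
    exists I'; split => //.
    move: HV' => /and3P [H1 H2 H3]; apply/and3P; split => //.
    by apply/forall_inP => i Hi; move: (forall_inP H3 _ Hi); lia.
  move=> I /and3P [H1 H2 H3]; apply: IHb; apply/and3P; split => //.
  apply/forall_inP => i Hi.
  have := forall_inP H3 _ Hi.
  have := forall_inP H1 _ Hi; rewrite HP.
  move=> /andP [_ Hri] Hki; rewrite ltn_neqAle Hki andbT; apply/eqP => Hki'.
  by move: Hri; rewrite -Hki' Hr.
Qed.

Lemma gr_max :
  \max_(I : {set 'I_n} | [forall i in I, P i] && nonoverlap I) #|I| = gr r s.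
Proof.
have [[I0 [HV0 HI0]] Hb] := key (n - 0) 0 (leqnn _).
rewrite drop0 in HI0 Hb.
apply/eqP; rewrite eqn_leq; apply/andP; split.
  apply/bigmax_leqP => I /andP [H1 H2]; apply: Hb; apply/and3P; split => //.
  by apply/forall_inP.
rewrite -HI0; apply: leq_bigmax_cond.
by move: HV0 => /and3P [-> -> _].
Qed.
End GrMax.


Fixpoint cnt (r : rel nat) (s : seq nat) : nat :=
  match s with
  | a :: t => match t with b :: _ => r a b + cnt r t | [::] => 0 end
  | [::] => 0 end.

Fixpoint run (r : rel nat) (s : seq nat) : nat :=
  match s with
  | a :: t => match t with b :: _ => if r a b then (run r t).+1 else 0 | [::] => 0 end
  | [::] => 0 end.

Lemma cnt_count (r : rel nat) (s : seq nat) :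
  count (fun i => (i.+1 < size s) && r (nth 0 s i) (nth 0 s i.+1)) (iota 0 (size s))
  = cnt r s.
Proof.
elim: s => [//|a t IH].
have E : cnt r (a :: t) = (if t is b :: _ then r a b else false) + cnt r t.
  by case: t {IH}.
have Ei : iota 1 (size t) = map S (iota 0 (size t)) by rewrite (iotaDl 1 0).
rewrite E -IH /= Ei count_map.
congr (_ + _); first by case: t {IH E Ei}.
Qed.

Lemma gr_cons (r : rel nat) a (t : seq nat) : t != [::] -> r a (head 0 t) ->
  gr r (a :: t) = gr r t + ~~ odd (run r t).
Proof.
elim: t a => [//|b u IH] a _ /= Hab; rewrite Hab.
case: u IH => [|c u'] IH /=; first by [].
case Hbc: (r b c).
  have := IH b isT Hbc. rewrite /= Hbc => ->.
  rewrite negbK; set Y := odd _; case: Y => /=; lia.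
by rewrite addn1.
Qed.

Lemma gr_cons_not (r : rel nat) a (t : seq nat) : ~~ r a (head 0 t) -> gr r (a :: t) = gr r t.
Proof. by case: t => [//|b u] /= /negbTE ->. Qed.

Lemma relin_cons (r : rel nat) f a (t : seq nat) :
  {in a :: t &, forall x y, r (f x) (f y) = r x y} ->
  {in t &, forall x y, r (f x) (f y) = r x y}.
Proof. by move=> H x y Hx Hy; apply: H; rewrite inE ?Hx ?Hy orbT. Qed.
Arguments relin_cons {r f a t}.

Lemma cnt2 (r : rel nat) a b u : cnt r [:: a, b & u] = r a b + cnt r (b :: u).
Proof. by []. Qed.
Lemma gr2 (r : rel nat) a b u :
  gr r [:: a, b & u] = if r a b then (gr r u).+1 else gr r (b :: u).
Proof. by []. Qed.
Lemma run2 (r : rel nat) a b u :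
  run r [:: a, b & u] = if r a b then (run r (b :: u)).+1 else 0.
Proof. by []. Qed.

Lemma stats_map (r : rel nat) f t :
  {in t &, forall a b, r (f a) (f b) = r a b} ->
  [/\ cnt r (map f t) = cnt r t, gr r (map f t) = gr r t & run r (map f t) = run r t].
Proof.
move: {2}(size t) (leqnn (size t)) => N.
elim: N t => [|N IH] t.
  by case: t.
case: t => [|a [|b u]] Hs Hm; [by [] | by [] | ].
have Hm' := relin_cons Hm.
have Hm'' := relin_cons Hm'.
have Hab : r (f a) (f b) = r a b by apply: Hm; rewrite !inE eqxx ?orbT.
have [H1 H2 H3] := IH (b :: u) Hs Hm'.
have [_ H2' _] := IH u ltac:(by move: Hs => /=; rewrite ltnS => /ltnW) Hm''.
rewrite (map_cons f a (b :: u)) (map_cons f b u) !cnt2 !gr2 !run2.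
rewrite -(map_cons f b u) H1 H2 H2' H3 Hab.
by [].
Qed.


Definition lif (m v : nat) := if v == m then m.+1 else v.
Definition unl (m v : nat) := if v == m.+1 then m else v.

Fixpoint A (n : nat) : seq (seq nat) :=
  match n with
  | 0 => [:: [::]]
  | n'.+1 => if n' is n''.+1 then
       map (cons n') (A n') ++ map (fun t => n'' :: map (lif n'') t) (A n')
     else [:: [:: 0]]
  end.

Lemma A_SS n : A n.+2 =
  map (cons n.+1) (A n.+1) ++ map (fun t => n :: map (lif n) t) (A n.+1).
Proof. by []. Qed.

Definition Qn n (s : seq nat) := [&& uniq s, all (fun v => v < n) s & size s == n].
Definition badP (s : seq nat) : Prop := exists i j k,
  [/\ i < j, j < k, k < size s, nth 0 s i < nth 0 s j & nth 0 s i < nth 0 s k].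

Lemma badP_cons a (t : seq nat) : badP (a :: t) <->
  (exists j k, [/\ j < k, k < size t, a < nth 0 t j & a < nth 0 t k]) \/ badP t.
Proof.
split.
- move=> [i [j [k [H1 H2 H3 H4 H5]]]].
  case: i H1 H4 H5 => [|i] H1 H4 H5.
    case: j H1 H2 H4 => [//|j] _ H2 H4; case: k H2 H3 H5 => [//|k] H2 H3 H5.
    by left; exists j, k.
  case: j H1 H2 H4 => [//|j] H1 H2 H4; case: k H2 H3 H5 => [//|k] H2 H3 H5.
  by right; exists i, j, k.
- move=> [[j [k [H1 H2 H3 H4]]] | [i [j [k [H1 H2 H3 H4 H5]]]]].
    by exists 0, j.+1, k.+1.
  by exists i.+1, j.+1, k.+1.
Qed.

Lemma badP_map f (t : seq nat) : {in t &, forall a b, (f a < f b) = (a < b)} ->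
  badP (map f t) <-> badP t.
Proof.
move=> Hm; split.
- move=> [i [j [k [H1 H2 H3 H4 H5]]]]; rewrite size_map in H3.
  have Hj : j < size t by apply: ltn_trans H3.
  have Hi : i < size t by apply: ltn_trans Hj.
  rewrite !(nth_map 0) // !Hm ?mem_nth // in H4 H5.
  by exists i, j, k.
- move=> [i [j [k [H1 H2 H3 H4 H5]]]].
  have Hj : j < size t by apply: ltn_trans H3.
  have Hi : i < size t by apply: ltn_trans Hj.
  exists i, j, k; rewrite size_map !(nth_map 0) // !Hm ?mem_nth //.
Qed.

Lemma mono_inj f (t : seq nat) : {in t &, forall a b, (f a < f b) = (a < b)} ->
  {in t &, injective f}.
Proof.
move=> Hm a b Ha Hb Hab.
case: (ltngtP a b) => // H; [have := Hm a b Ha Hb | have := Hm b a Hb Ha];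
  by rewrite H Hab ltnn.
Qed.

Arguments mono_inj {f t}.

Arguments badP_map {f t}.

Lemma Qn_mem n s : Qn n s -> forall x, x < n -> x \in s.
Proof.
move=> /and3P [Hu Ha /eqP Hs] x Hx.
have Hsub : {subset s <= iota 0 n}.
  by move=> v Hv; rewrite mem_iota /= add0n (allP Ha v Hv).
have Hsz : size (iota 0 n) <= size s by rewrite size_iota Hs.
have [_ Heq] := uniq_min_size Hu Hsub Hsz.
by rewrite Heq mem_iota.
Qed.
Arguments Qn_mem {n s}.

Lemma A_sound n s : s \in A n -> Qn n s /\ ~ badP s.
Proof.
elim: n s => [|[|n] IH] s.
- rewrite inE => /eqP ->; split => //; by move=> [i [j [k [_ _ H _ _]]]].
- rewrite inE => /eqP ->; split => //.
  move=> [i [j [k [H1 H2 H3 _ _]]]]; move: H3 => /=; lia.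
rewrite A_SS mem_cat => /orP [/mapP [t Ht ->] | /mapP [t Ht ->]];
  have [Qt nbt] := IH t Ht; move: Qt => /and3P [Hu Ha /eqP Hs].
- split.
    apply/and3P; split.
    + rewrite /= Hu andbT; apply/negP => Hin; have := allP Ha _ Hin; rewrite ltnn.
      done.
    + rewrite /= ltnSn /=; apply: sub_all Ha => v /= Hv; lia.
    + by rewrite /= Hs.
  move/badP_cons => [[j [k [Hjk Hk Hj _]]] | //].
  have := allP Ha (nth 0 t j) (mem_nth 0 (ltn_trans Hjk Hk)).
  move: Hj => /=; lia.
- have Hle : {in t, forall v, v <= n} by move=> v Hv; have := allP Ha v Hv; lia.
  have Hmono : {in t &, forall a b, (lif n a < lif n b) = (a < b)}.
    move=> a b Ha' Hb'; have := Hle a Ha'; have := Hle b Hb'.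
    rewrite /lif; case: eqP; case: eqP; lia.
  split.
    apply/and3P; split.
    + rewrite /= (map_inj_in_uniq (mono_inj Hmono)) Hu andbT.
      apply/mapP => [[v Hv]]; rewrite /lif; case: (v =P n) => [_ | Hvn] E.
        lia.
      exact: Hvn (esym E).
    + rewrite /= ltnW //= all_map; apply/allP => v Hv /=.
      have := Hle v Hv; rewrite /lif; case: eqP; lia.
    + by rewrite /= size_map Hs.
  move/badP_cons => [[j [k [Hjk Hk Hj Hk']]] | /(badP_map Hmono) //].
  rewrite size_map in Hk.
  have Hjs : j < size t by apply: ltn_trans Hk.
  rewrite !(nth_map 0) // in Hj Hk'.
  have Ej : nth 0 t j = n.
    move: Hj; have := Hle _ (mem_nth 0 Hjs); rewrite /lif.
    case: eqP => [E _ _ // | _ H1 H2]; by move: H2; rewrite ltnNge H1.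
  have Ek : nth 0 t k = n.
    move: Hk'; have := Hle _ (mem_nth 0 Hk); rewrite /lif.
    case: eqP => [E _ _ // | _ H1 H2]; by move: H2; rewrite ltnNge H1.
  have := nth_uniq 0 Hjs Hk Hu; rewrite Ej Ek eqxx => /esym /eqP Hjk'.
  lia.
Qed.

Lemma A_complete n s : Qn n s -> ~ badP s -> s \in A n.
Proof.
elim: n s => [|[|n] IH] s.
- by move=> /and3P [_ _ /eqP /size0nil ->] _; rewrite inE.
- case: s => [|a [|b u]] /and3P [_ Ha Hs] _; move: Hs => //= _.
  move: Ha => /= /andP [Ha _]; by have -> : a = 0 by lia.
move: s => [|a t] Q Hnb; first by move: Q => /and3P [_ _ /eqP].
have Qm := Qn_mem Q.
move: Q => /and3P [Hu Ha /eqP Hs].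
simpl in Hu, Ha.
move/andP: Hu => [Hat Hu]; move/andP: Ha => [Ha Hat'].
have {}Hs : size t = n.+1 by case: Hs.
have Hge : n <= a.
  rewrite leqNgt; apply/negP => Han.
  have H1 : n.+1 \in t.
    have := Qm n.+1 (ltnSn _); rewrite inE => /orP [/eqP E | //]; lia.
  have H2 : n \in t.
    have := Qm n (ltnW (ltnSn _)); rewrite inE => /orP [/eqP E | //]; lia.
  set j0 := index n.+1 t; set k0 := index n t.
  have Hj0 : j0 < size t by rewrite index_mem.
  have Hk0 : k0 < size t by rewrite index_mem.
  have Ej : nth 0 t j0 = n.+1 by rewrite nth_index.
  have Ek : nth 0 t k0 = n by rewrite nth_index.
  apply: Hnb; apply/badP_cons; left.
  case: (ltngtP j0 k0) => Hjk.
  - by exists j0, k0; rewrite Ej Ek; split => //; lia.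
  - by exists k0, j0; rewrite Ej Ek; split => //; lia.
  - by move: Ej; rewrite Hjk Ek; lia.
have Hbt : ~ badP t by move=> H; apply: Hnb; apply/badP_cons; right.
have Hvt : {in t, forall v, v < n.+2 /\ v != a}.
  move=> v Hv; split; first exact: (allP Hat').
  by apply/negP => /eqP E; move: Hat; rewrite -E Hv.
case: (ltngtP a n.+1) => Han; last 1 first.
- rewrite Han A_SS mem_cat; apply/orP; left; apply: map_f; apply: IH => //.
  apply/and3P; split => //; last by rewrite Hs.
  apply/allP => v Hv; have [H1 H2] := Hvt v Hv; move: H2; rewrite Han; lia.
- have Ea : a = n by lia.
  subst a.
  have Hmono : {in t &, forall a b, (unl n a < unl n b) = (a < b)}.
    move=> a b Ha' Hb'; have [Ha1 Ha2] := Hvt a Ha'; have [Hb1 Hb2] := Hvt b Hb'.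
    move/eqP: Ha2 => Ha2; move/eqP: Hb2 => Hb2; rewrite /unl; case: eqP; case: eqP; lia.
  have Ht' : map (unl n) t \in A n.+1.
    apply: IH; last by move/(badP_map Hmono).
    apply/and3P; split.
    + by rewrite (map_inj_in_uniq (mono_inj Hmono)).
    + rewrite all_map; apply/allP => v Hv /=; have [H1 H2] := Hvt v Hv.
      move/eqP: H2 => H2; rewrite /unl; case: eqP; lia.
    + by rewrite size_map Hs.
  rewrite A_SS mem_cat; apply/orP; right.
  have -> : t = map (lif n) (map (unl n) t).
    rewrite -map_comp map_id_in // => v Hv /=; have [H1 H2] := Hvt v Hv.
    move/eqP: H2 => H2; rewrite /unl /lif; case: (v =P n.+1) => E; first by rewrite eqxx E.
    case: eqP; lia.
  by apply: (map_f (fun t => n :: map (lif n) t)).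
- by lia.
Qed.

Lemma A_uniq n : uniq (A n).
Proof.
elim: n => [|[|n] IH] //.
rewrite A_SS cat_uniq; apply/and3P; split.
- by rewrite map_inj_uniq // => x y [].
- apply/hasPn => x /mapP [t _ ->]; apply/negP => /mapP [t' _ [E _]]; lia.
- rewrite map_inj_in_uniq // => t1 t2 H1 H2 [] E.
  have K : forall t, t \in A n.+1 -> map (unl n) (map (lif n) t) = t.
    move=> t Ht; have [/and3P [_ Ha _] _] := A_sound n.+1 t Ht.
    rewrite -map_comp map_id_in // => v Hv /=; have := allP Ha v Hv.
    rewrite /unl /lif; case: (v =P n) => E1; first by rewrite eqxx E1.
    case: eqP; lia.
  by rewrite -(K t1 H1) E K.
Qed.

Lemma pat132E (a : 'I_3) : val (pat132 a) = nth 0 [:: 0; 2; 1] a.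
Proof.
have v1 : nat_of_ord (inord 1 : 'I_3) = 1 by rewrite inordK.
have v2 : nat_of_ord (inord 2 : 'I_3) = 2 by rewrite inordK.
case: a => m Ha; rewrite /pat132.
case: m Ha => [|[|[|m]]] Ha.
- rewrite tpermD //.
  + by apply/eqP => /(congr1 (@nat_of_ord 3)); rewrite v1.
  + by apply/eqP => /(congr1 (@nat_of_ord 3)); rewrite v2.
- have -> : Ordinal Ha = inord 1 by apply: val_inj; rewrite /= v1.
  by rewrite tpermL /= v1 v2.
- have -> : Ordinal Ha = inord 2 by apply: val_inj; rewrite /= v2.
  by rewrite tpermR /= v1 v2.
- by [].
Qed.


Section Perm.
Variable n : nat.

Lemma size_oneline (pi : 'S_n) : size (oneline pi) = n.
Proof. by rewrite /oneline size_map size_enum_ord. Qed.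

Lemma nth_oneline (pi : 'S_n) (i : 'I_n) : nth 0 (oneline pi) i = pi i.
Proof.
by rewrite /oneline (nth_map i) ?size_enum_ord // nth_ord_enum.
Qed.

Lemma oneline_Q (pi : 'S_n) : Qn n (oneline pi).
Proof.
apply/and3P; split.
- rewrite /oneline map_inj_uniq ?enum_uniq // => i j /val_inj; exact: perm_inj.
- by apply/allP => v /mapP [i _ ->]; exact: ltn_ord.
- by rewrite size_oneline.
Qed.

Lemma oneline_inj : injective (@oneline n).
Proof.
move=> pi1 pi2 E; apply/permP => i; apply: val_inj => /=.
have := nth_oneline pi1 i; by rewrite E nth_oneline.
Qed.

Lemma oneline_surj s : Qn n s -> exists pi : 'S_n, oneline pi = s.
Proof.
move=> /and3P [Hu Ha /eqP Hs].
have Hlt : forall i : 'I_n, nth 0 s i < n.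
  by move=> i; apply: (allP Ha); apply: mem_nth; rewrite Hs.
pose f := fun i : 'I_n => Ordinal (Hlt i).
have Hf : injective f.
  move=> i j /(congr1 val) /= E; apply: val_inj => /=.
  by apply/eqP; rewrite -(nth_uniq 0 _ _ Hu) ?Hs // E.
exists (perm Hf).
apply: (@eq_from_nth _ 0); first by rewrite size_oneline.
move=> i; rewrite size_oneline => Hi.
by rewrite (nth_oneline _ (Ordinal Hi)) permE.
Qed.

Lemma contains_of (pi : 'S_n) (tau : 'S_3) (x : 'I_3 -> 'I_n) :
  (forall a b : 'I_3, a < b -> x a < x b) ->
  (forall a b : 'I_3, (pi (x a) < pi (x b)) = (tau a < tau b)) -> contains pi tau.
Proof.
move=> H1 H2; apply/existsP; exists (finfun x).
apply/forallP => a; apply/forallP => b; rewrite !ffunE; apply/andP; split.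
  by apply/implyP; apply: H1.
by rewrite H2.
Qed.

Lemma contains_bad (pi : 'S_n) (tau : 'S_3) :
  tau ord0 < tau (inord 1) -> tau ord0 < tau (inord 2) ->
  contains pi tau -> badP (oneline pi).
Proof.
move=> T1 T2 /existsP [f /forallP H].
have o1 : (ord0 : 'I_3) < (inord 1 : 'I_3) by rewrite inordK.
have o12 : (inord 1 : 'I_3) < (inord 2 : 'I_3) by rewrite !inordK.
have o2 : (ord0 : 'I_3) < (inord 2 : 'I_3) by rewrite inordK.
have := forallP (H ord0) (inord 1) => /andP [/implyP /(_ o1) F01 /eqP E01].
have := forallP (H ord0) (inord 2) => /andP [/implyP /(_ o2) F02 /eqP E02].
have := forallP (H (inord 1)) (inord 2) => /andP [/implyP /(_ o12) F12 _].
exists (f ord0), (f (inord 1)), (f (inord 2)).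
by rewrite size_oneline !nth_oneline E01 E02 T1 T2 ltn_ord.
Qed.

Lemma pat132N (a : 'I_3) : nat_of_ord (pat132 a) = nth 0 [:: 0; 2; 1] a.
Proof. exact: pat132E. Qed.

Lemma bad_contains (pi : 'S_n) :
  badP (oneline pi) -> contains pi pat123 || contains pi pat132.
Proof.
move=> [i [j [k [Hij Hjk Hk Hi Hj]]]]; rewrite size_oneline in Hk.
have Hjn : j < n by lia.
have Hin : i < n by lia.
pose oi := Ordinal Hin; pose oj := Ordinal Hjn; pose ok := Ordinal Hk.
have Vi : nth 0 (oneline pi) i = pi oi := nth_oneline pi oi.
have Vj : nth 0 (oneline pi) j = pi oj := nth_oneline pi oj.
have Vk : nth 0 (oneline pi) k = pi ok := nth_oneline pi ok.
rewrite Vi Vj Vk in Hi Hj.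
pose x := fun a : 'I_3 => nth oi [:: oi; oj; ok] a.
have Hx : forall a b : 'I_3, a < b -> x a < x b.
  move=> [[|[|[|a]]] Ha] [[|[|[|b]]] Hb] //= Hab; lia.
have Hjk' : pi oj != pi ok.
  apply/negP => /eqP /perm_inj E; move: (congr1 val E) => /=; lia.
case: (ltngtP (pi oj) (pi ok)) => Hjk2; last by move: Hjk'; rewrite -(inj_eq val_inj) /= Hjk2 eqxx.
- apply/orP; left; apply: (contains_of pi _ x Hx) => a b.
  rewrite /pat123 !perm1.
  move: a b => [[|[|[|a]]] Ha] [[|[|[|b]]] Hb] //; rewrite /x /=; lia.
- apply/orP; right; apply: (contains_of pi _ x Hx) => a b.
  rewrite !pat132N.
  move: a b => [[|[|[|a]]] Ha] [[|[|[|b]]] Hb] //; rewrite /x /=; lia.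
Qed.

End Perm.

Section Poly5.
Variables (R : comNzRingType) (p q y z : R).
Local Open Scope ring_scope.

Definition step (v : R * R * R * R) : R * R * R * R :=
  let: (T1, T0, S1, S0) := v in
  (q * (T0 + S0), q * z * (T1 + S1), p * y * (T0 + T1) + q * S0, q * z * S1).

Definition sum4 (v : R * R * R * R) : R :=
  let: (a, b, c, d) := v in a + b + c + d.

Definition V (k : nat) := iter k step (1, 0, 0, 0).

Definition gs (n : nat) : R := if n is k.+1 then sum4 (V k) else 1.

Lemma cayley (v : R * R * R * R) :
  sum4 (step (step (step (step v)))) =
  (2 * q^+2 * z + p * q * y * z) * sum4 (step (step v))
  + (2 * p * q^+2 * y * z) * sum4 (step v)
  - (q^+4 * z^+2 - p * q^+3 * y * z^+2) * sum4 v.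
Proof. case: v => [[[a b] c] d] /=. ring. Qed.

Lemma gs_rec m : gs m.+4.+1 =
  (2 * q^+2 * z + p * q * y * z) * gs m.+3
  + (2 * p * q^+2 * y * z) * gs m.+2
  - (q^+4 * z^+2 - p * q^+3 * y * z^+2) * gs m.+1.
Proof. by rewrite /gs /V !iterS cayley. Qed.

Lemma poly_part n :
  (Dpoly p q y z * \poly_(i < n.+1) gs i)`_n = (Apoly p q y z)`_n.
Proof.
rewrite /Dpoly /Apoly.
rewrite !(mulrBl, mulrDl) -!mulrA mul1r !coefE.
case: n => [|[|[|[|[|m]]]]] /=.
- rewrite /gs /=. ring.
- rewrite /gs /=. ring.
- rewrite /gs /V /=. ring.
- rewrite /gs /V /=. ring.
- rewrite /gs /V /=. ring.
have h1 : (m.+1.+4 < m.+2.+4)%N by lia.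
have h2 : (m.+3 < m.+2.+4)%N by lia.
have h3 : (m.+2 < m.+2.+4)%N by lia.
have h4 : (m.+1 < m.+2.+4)%N by lia.
rewrite h1 h2 h3 h4 cayley. ring.
Qed.
End Poly5.


Arguments A_sound {n s}.
Arguments stats_map {r f t}.
Definition ltr : rel nat := fun a b => a < b.
Definition gtr : rel nat := fun a b => b < a.
Definition ed (t : seq nat) : bool := ~~ odd (run gtr t).

Lemma prep_desc a (t : seq nat) : t != [::] -> head 0 t < a ->
  [/\ cnt ltr (a :: t) = cnt ltr t, cnt gtr (a :: t) = (cnt gtr t).+1,
      gr ltr (a :: t) = gr ltr t, gr gtr (a :: t) = gr gtr t + ed t
    & ed (a :: t) = ~~ ed t].
Proof.
case: t => [//|b u] H0 Hb; have Hb' : b < a := Hb.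
have Hab : (a < b) = false by lia.
split.
- by rewrite cnt2 /ltr Hab.
- by rewrite cnt2 {1}/gtr Hb'.
- by rewrite gr_cons_not // /ltr /= Hab.
- by rewrite gr_cons.
- by rewrite /ed run2 {1}/gtr Hb'.
Qed.

Lemma prep_asc a (t : seq nat) : t != [::] -> a < head 0 t ->
  [/\ cnt ltr (a :: t) = (cnt ltr t).+1, cnt gtr (a :: t) = cnt gtr t,
      gr ltr (a :: t) = gr ltr t + ~~ odd (run ltr t), gr gtr (a :: t) = gr gtr t
    & ed (a :: t) = true].
Proof.
case: t => [//|b u] H0 Hb; have Hb' : a < b := Hb.
have Hab : (b < a) = false by lia.
split.
- by rewrite cnt2 {1}/ltr Hb'.
- by rewrite cnt2 {1}/gtr Hab.
- by rewrite gr_cons.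
- by rewrite gr_cons_not // /gtr /= Hab.
- by rewrite /ed run2 {1}/gtr Hab.
Qed.

Arguments prep_desc {a t}.
Arguments prep_asc {a t}.

Lemma run_top k (t : seq nat) : uniq t -> {in t, forall v, v <= k} ->
  head 0 t = k -> run ltr t = 0.
Proof.
case: t => [//|b [//|c u]] Hu Hle /= Eh.
rewrite Eh /ltr.
have Hc' : c \in [:: b, c & u] by rewrite !inE eqxx orbT.
have := Hle c Hc'.
move: Hu; rewrite /= Eh inE negb_or => /andP [/andP [/eqP Hkc _] _] Hck.
by have -> : (k < c) = false by lia.
Qed.

Section Sums.
Variables (R : comNzRingType) (p q y z : R).
Local Open Scope ring_scope.

Definition wt (s : seq nat) : R :=
  p ^+ cnt ltr s * q ^+ cnt gtr s * y ^+ gr ltr s * z ^+ gr gtr s.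

Lemma wt_desc a (t : seq nat) : t != [::] -> (head 0 t < a)%N ->
  wt (a :: t) = q * z ^+ ed t * wt t.
Proof.
move=> H1 H2; rewrite /wt; have [-> -> -> -> _] := prep_desc H1 H2.
rewrite exprS exprD; ring.
Qed.

Lemma wt_asc a (t : seq nat) : t != [::] -> (a < head 0 t)%N ->
  wt (a :: t) = p * y ^+ (~~ odd (run ltr t)) * wt t.
Proof.
move=> H1 H2; rewrite /wt; have [-> -> -> -> _] := prep_asc H1 H2.
rewrite exprS exprD; ring.
Qed.

Arguments wt_desc {a t}.
Arguments wt_asc {a t}.

Lemma Gcoef_A n : Gcoef p q y z n = \sum_(s <- A n) wt s.
Proof.
rewrite /Gcoef.
have E : forall pi : 'S_n, p ^+ asc pi * q ^+ des pi * y ^+ MNA pi * z ^+ MND pi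
                          = wt (oneline pi).
  move=> pi; rewrite /wt.
  have -> : asc pi = cnt ltr (oneline pi).
    by rewrite /asc -cnt_count size_oneline.
  have -> : des pi = cnt gtr (oneline pi).
    by rewrite /des -cnt_count size_oneline.
  have -> : MNA pi = gr ltr (oneline pi).
    exact: (@gr_max n (oneline pi) ltr (is_asc pi) (size_oneline _ pi) (fun i => erefl)).
  have -> : MND pi = gr gtr (oneline pi).
    exact: (@gr_max n (oneline pi) gtr (is_des pi) (size_oneline _ pi) (fun i => erefl)).
  by [].
rewrite (eq_bigr _ (fun pi _ => E pi)).
rewrite -big_filter -(big_map (@oneline n) xpredT wt).
apply: perm_big; apply: uniq_perm.
- by rewrite map_inj_uniq ?filter_uniq ?index_enum_uniq //; exact: oneline_inj.
- exact: A_uniq.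
move=> s; apply/idP/idP.
- move=> /mapP [pi]; rewrite mem_filter => /andP [/andP [Av1 Av2] _] ->.
  apply: A_complete; first exact: oneline_Q.
  move=> /bad_contains /orP [H | H]; [by move: Av1; rewrite /avoids H | by move: Av2; rewrite /avoids H].
- move=> /A_sound [Q Nb]; have [pi Hpi] := oneline_surj _ _ Q.
  rewrite -Hpi; apply: map_f; rewrite mem_filter mem_index_enum andbT.
  apply/andP; split; apply/negP => Hc; apply: Nb; rewrite -Hpi.
  + apply: (contains_bad _ _ _ _ _ Hc); rewrite /pat123 !perm1 inordK //.
  + apply: (contains_bad _ _ _ _ _ Hc); rewrite !pat132N inordK //.
Qed.

Definition hd m (t : seq nat) : bool := head 0 t == m.-1.
Definition X m b e : R :=
  \sum_(t <- A m) (if (hd m t == b) && (ed t == e) then wt t else 0).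

Lemma A_facts k t : t \in A k.+1 ->
  [/\ t != [::], (head 0 t < k.+1)%N & {in t, forall v, (v <= k)%N}].
Proof.
move=> Ht; have [/and3P [Hu Ha /eqP Hs] _] := A_sound Ht.
have Hle : {in t, forall v, (v <= k)%N} by move=> v Hv; have := allP Ha v Hv.
case: t Ht Hu Ha Hs Hle => [//|b u] Ht Hu Ha Hs Hle; split => //.
by have := Hle b (mem_head _ _).
Qed.
Arguments A_facts {k t}.

Lemma stepT k t : t \in A k.+1 ->
  [/\ hd k.+2 (k.+1 :: t) = true, ed (k.+1 :: t) = ~~ ed t
     & wt (k.+1 :: t) = q * z ^+ ed t * wt t].
Proof.
move=> Ht; have [H0 Hh _] := A_facts Ht.
have [_ _ _ _ E] := prep_desc H0 Hh.
by rewrite /hd /= eqxx E (wt_desc H0 Hh).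
Qed.

Lemma stepS k t : t \in A k.+1 ->
  [/\ hd k.+2 (k :: map (lif k) t) = false,
      ed (k :: map (lif k) t) = (if hd k.+1 t then true else ~~ ed t)
    & wt (k :: map (lif k) t) = (if hd k.+1 t then p * y * wt t else q * z ^+ ed t * wt t)].
Proof.
move=> Ht; have [H0 Hh Hle] := A_facts Ht.
have [/and3P [Hu _ _] _] := A_sound Ht.
have Hm : forall r : rel nat, (r = ltr \/ r = gtr) ->
    {in t &, forall a b, r (lif k a) (lif k b) = r a b}.
  move=> r Hr a b Ha Hb; have := Hle a Ha; have := Hle b Hb.
  by case: Hr => ->; rewrite /ltr /gtr /lif; case: eqP; case: eqP; lia.
have [C1 G1 R1] := stats_map (Hm ltr (or_introl erefl)).
have [C2 G2 R2] := stats_map (Hm gtr (or_intror erefl)).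
have Wt : wt (map (lif k) t) = wt t by rewrite /wt C1 C2 G1 G2.
have Et : ed (map (lif k) t) = ed t by rewrite /ed R2.
have H0' : map (lif k) t != [::] by case: t H0 {Ht Hh Hle Hu Hm C1 G1 R1 C2 G2 R2 Wt Et}.
have Hhd : head 0 (map (lif k) t) = lif k (head 0 t) by case: t H0 {Ht Hh Hle Hu Hm C1 G1 R1 C2 G2 R2 Wt Et H0'}.
have Hk : hd k.+2 (k :: map (lif k) t) = false by rewrite /hd /=; lia.
rewrite Hk /hd /=.
case: eqP => Eh.
- have Hlt : (k < head 0 (map (lif k) t))%N by rewrite Hhd Eh /lif eqxx.
  have [_ _ _ _ E] := prep_asc H0' Hlt.
  rewrite E (wt_asc H0' Hlt) R1 Wt.
  rewrite (run_top _ _ Hu Hle Eh).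
  by rewrite /= expr1.
- have Hlt : (head 0 (map (lif k) t) < k)%N.
    rewrite Hhd /lif; case: eqP => [E' | _]; first by [].
    by rewrite ltn_neqAle -ltnS Hh andbT; apply/eqP.
  have [_ _ _ _ E] := prep_desc H0' Hlt.
  by rewrite E (wt_desc H0' Hlt) Et Wt.
Qed.

Lemma Xstep k b e : X k.+2 b e = \sum_(t <- A k.+1)
  ((if (true == b) && (~~ ed t == e) then q * z ^+ ed t * wt t else 0) +
   (if (false == b) && ((if hd k.+1 t then true else ~~ ed t) == e)
    then (if hd k.+1 t then p * y * wt t else q * z ^+ ed t * wt t) else 0)).
Proof.
rewrite /X A_SS big_cat !big_map big_split.
congr (_ + _); apply: eq_big_seq => t Ht.
  by have [T1 T2 T3] := stepT _ _ Ht; rewrite T1 T2 T3.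
by have [S1 S2 S3] := stepS _ _ Ht; rewrite S1 S2 S3.
Qed.

Lemma X_rec k :
  [/\ X k.+2 true true = q * (X k.+1 true false + X k.+1 false false),
      X k.+2 true false = q * z * (X k.+1 true true + X k.+1 false true),
      X k.+2 false true = p * y * (X k.+1 true false + X k.+1 true true)
                          + q * X k.+1 false false
    & X k.+2 false false = q * z * X k.+1 false true].
Proof.
split; rewrite Xstep /X -?big_split /= ?mulr_sumr -?big_split /=;
  apply: eq_big_seq => t Ht; case: (hd _ t); case: (ed t); rewrite /=; ring.
Qed.

Lemma X1 b e : X 1 b e = if b && e then 1 else 0.
Proof.
rewrite /X /= big_cons big_nil /hd /ed /wt /=.
by case: b; case: e; rewrite /= ?expr0 ?mulr1 ?addr0.
Qed.

Lemma sumA k : \sum_(t <- A k.+1) wt t =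
  X k.+1 true true + X k.+1 true false + X k.+1 false true + X k.+1 false false.
Proof.
rewrite /X -!big_split; apply: eq_bigr => t _.
case: (hd _ t); case: (ed t); rewrite /=; ring.
Qed.

Lemma Xv_V k : (X k.+1 true true, X k.+1 true false, X k.+1 false true, X k.+1 false false)
  = V R p q y z k.
Proof.
elim: k => [|k IH]; first by rewrite !X1.
rewrite /V iterS -/(V R p q y z k) -IH.
have [-> -> -> ->] := X_rec k.
reflexivity.
Qed.

Lemma G_gs n : Gcoef p q y z n = gs R p q y z n.
Proof.
rewrite Gcoef_A; case: n => [|k].
  by rewrite /= big_cons big_nil /wt /= !expr0 !mulr1 addr0.
by rewrite sumA /gs -Xv_V.
Qed.

End Sums.

Local Open Scope ring_scope.
Theorem theorem2 (R : comNzRingType) (p q y z : R) (n : nat) :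
  (Dpoly p q y z * \poly_(i < n.+1) Gcoef p q y z i)`_n = (Apoly p q y z)`_n.
Proof.
rewrite (@eq_poly _ _ _ (gs R p q y z)); first exact: poly_part.
by move=> i _; apply: G_gs.
Qed.
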